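(* Consider the clique inference problem with nonnegative vertex potentials and the Potts clique potential $C(\mathbf{v})=\lambda\sum_{v\in V}n_v(\mathbf{v})^2$ with $\lambda>0$. Let $\hat{\mathbf{v}}$ be the assignment returned by the $\alpha$-pass algorithm and $\mathbf{v}^*$ an assignment maximizing $F$. Then $F(\hat{\mathbf{v}})\ge\frac{13}{15}F(\mathbf{v}^* )$.
   Context: Clique inference problem: there are $n$ vertices $1,\dots,n$, a finite set $V$ of values ($|V|\ge 2$), real vertex potentials $\psi_{jv}$ ($1\le j\le n$, $v\in V$), and a clique potential $C$ depending only on the counts $n_v(\mathbf{v})=|\{j:v_j=v\}|$. The objective is $F(\mathbf{v})=\sum_{j=1}^n\psi_{jv_j}+C(\mathbf{v})$ over $\mathbf{v}\in V^n$. The $\alpha$-pass algorithm: for each $\alpha\in V$, sort the vertices in decreasing order of $\psi_{j\alpha}-\max_{v\neq\alpha}\psi_{jv}$; for each $k\in\{1,\dots,n\}$ form the assignment giving the first $k$ sorted vertices the value $\alpha$ and every other vertex a value $v\ne\alpha$ maximizing $\psi_{jv}$; output the formed assignment with the largest $F$ over all $\alpha$ and $k$. *)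

(* Defs.v *)
From HB Require Import structures.
From mathcomp Require Import all_boot all_order all_algebra all_fingroup.
Set Implicit Arguments. Unset Strict Implicit. Unset Printing Implicit Defensive.
Import Order.TTheory GRing.Theory Num.Theory.
Local Open Scope ring_scope.

(* Vertices are 'I_n, values form a finite type V.  An assignment is a
   finite function {ffun 'I_n -> V}; psi j v is the vertex potential. *)

Section CliqueInference.
Variables (R : realFieldType) (V : finType) (n : nat).

Definition assignment := {ffun 'I_n -> V}.

Definition nval (x : assignment) (v : V) : nat := #|[set j | x j == v]|.

Definition objF (psi : 'I_n -> V -> R) (C : assignment -> R) (x : assignment) : R :=
  \sum_(j < n) psi j (x j) + C x.

Definition potts (lam : R) (x : assignment) : R :=
  lam * \sum_(v : V) ((nval x v)%:R ^+ 2).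

(* Tie-breaking data of an alpha-pass run:
   - c a j : the value v <> a maximizing psi j v chosen for vertex j in pass a;
   - s a   : the sorted order of vertices in pass a (position p holds vertex s a p). *)
Definition best_other_choice (psi : 'I_n -> V -> R) (c : V -> 'I_n -> V) : Prop :=
  forall a j, c a j != a /\ (forall v, v != a -> psi j v <= psi j (c a j)).

(* psi_{j a} - max_{v <> a} psi_{j v}; equals psi j a - psi j (c a j) when
   c satisfies best_other_choice. *)
Definition margin (psi : 'I_n -> V -> R) (c : V -> 'I_n -> V) (a : V) (j : 'I_n) : R :=
  psi j a - psi j (c a j).

Definition sorted_order (psi : 'I_n -> V -> R) (c : V -> 'I_n -> V)
    (s : V -> {perm 'I_n}) : Prop :=
  forall a (p q : 'I_n), (p < q)%N -> margin psi c a (s a q) <= margin psi c a (s a p).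

Definition formed (c : V -> 'I_n -> V) (s : V -> {perm 'I_n}) (a : V) (k : nat)
  : assignment :=
  [ffun j => if (val ((s a)^-1%g j) < k)%N then a else c a j].

(* xhat is a possible output of the alpha-pass algorithm (for the given
   tie-breaking data): the formed assignment with largest F over all a and
   1 <= k <= n. *)
Definition alpha_pass_output (psi : 'I_n -> V -> R) (C : assignment -> R)
    (c : V -> 'I_n -> V) (s : V -> {perm 'I_n}) (xhat : assignment) : Prop :=
  best_other_choice psi c /\ sorted_order psi c s /\
  (exists a0 k0, (0 < k0 <= n)%N /\ xhat = formed c s a0 k0) /\
  (forall a k, (0 < k <= n)%N -> objF psi C (formed c s a k) <= objF psi C xhat).

End CliqueInference.

(* Main.v *)
Require Import Defs.
From HB Require Import structures.
From mathcomp Require Import all_boot all_order all_algebra all_fingroup.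
From mathcomp Require Import ring lra.
Set Implicit Arguments. Unset Strict Implicit. Unset Printing Implicit Defensive.
Import Order.TTheory GRing.Theory Num.Theory.
Local Open Scope ring_scope.

Lemma sum_exchange (R : realFieldType) (I : finType) (A B : {set I}) (f g : I -> R) :
  #|A| = #|B| -> (forall i j, i \in A -> j \in B -> g j <= f i) ->
  \sum_(j in B) g j <= \sum_(i in A) f i.
Proof.
move=> hc hfg.
case: (set_0Vmem A) => [A0|[i0 Ai0]].
  have B0 : B = set0 by apply/eqP; rewrite -cards_eq0 -hc A0 cards0.
  by rewrite A0 B0 !big_set0.
case: (arg_minP f Ai0) => i1 Ai1 hmin.
apply: (le_trans (y := \sum_(j in B) f i1)).
  by apply: ler_sum => j Bj; apply: hfg.
rewrite sumr_const -hc -sumr_const.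
by apply: ler_sum => i Ai; apply: hmin.
Qed.

Definition top (n : nat) (s : {perm 'I_n}) (k : nat) : {set 'I_n} :=
  [set j | (val (s^-1%g j) < k)%N].

Lemma card_top n (s : {perm 'I_n}) k : (k <= n)%N -> #|top s k| = k.
Proof.
move=> hk.
have -> : top s k = (s^-1%g) @^-1: [set p : 'I_n | (val p < k)%N].
  by apply/setP => j; rewrite !inE.
rewrite card_preimset; last exact: perm_inj.
have -> : [set p : 'I_n | (val p < k)%N] = (widen_ord hk) @: [set: 'I_k].
  apply/setP => p; rewrite !inE; apply/idP/imsetP.
    by move=> hp; exists (Ordinal hp) => //; apply: val_inj.
  by case=> q _ ->; rewrite /= ltn_ord.
rewrite card_imset ?cardsT ?card_ord //.
by move=> x y /(congr1 val) /= /val_inj.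
Qed.
Lemma f2pos (R : realFieldType) (X Y Z : R) :
  0 <= Z -> 2*Z <= Y -> Y <= X ->
  0 <= 2*X*X - 9*Y*Y - 11*Z*Z + 8*X*Y + 4*X*Z + 4*Y*Z.
Proof.
move=> h1 h2 h3.
have h4 : 0 <= Z * (Y - 2*Z) by apply: mulr_ge0; lra.
have h5 : 0 <= (X - Y) * Y by apply: mulr_ge0; lra.
have h6 : 0 <= (X - Y) * Z by apply: mulr_ge0; lra.
have h7 : 0 <= Y * Y by nra.
nra.
Qed.
Lemma f3pos (R : realFieldType) (X Y Z : R) :
  Z <= Y -> Y <= 2*Z -> Y <= X ->
  0 <= 2*X*X - 10*Y*Y - 10*Z*Z + 6*X*Y + 6*X*Z + 6*Y*Z.
Proof.
move=> h1 h2 h3.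
have h4 : 0 <= (Y - Z) * (2*Z - Y) by apply: mulr_ge0; lra.
have h5 : 0 <= (X - Y) * Y by apply: mulr_ge0; lra.
have h6 : 0 <= (X - Y) * Z by apply: mulr_ge0; lra.
have h8 : 0 <= (X - Y) * (X-Y) by nra.
have h7 : 0 <= Y * Y by nra.
nra.
Qed.
Lemma Jpos (R : realFieldType) (X Y Z D W : R) :
  0 <= Z -> Z <= Y -> Y <= X -> 0 <= D -> W <= Z * D -> W <= D * D ->
  0 <= 4 * (X+Y+Z) * D + 2 * D * D - 13 * W.
Proof.
move=> h1 h2 h3 h4 h5 h6.
have h7 : 0 <= (X - Z) * D by apply: mulr_ge0; lra.
have h8 : 0 <= (Y - Z) * D by apply: mulr_ge0; lra.
case: (lerP D Z) => hDZ.
  have h9 : 0 <= (Z - D) * D by apply: mulr_ge0; lra.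
  nra.
have h9 : 0 <= (D - Z) * D by apply: mulr_ge0; lra.
nra.
Qed.
Lemma arith (R : realFieldType) (L P F a1 a2 a3 X Y Z D W : R) :
  0 < L -> 0 <= a1 -> 0 <= a2 -> 0 <= a3 -> a1 + a2 + a3 <= P ->
  0 <= Z -> Z <= Y -> Y <= X -> 0 <= D -> W <= Z * D -> W <= D * D ->
  P + L * X ^+ 2 <= F ->
  P - a2 + L * (X + Y) ^+ 2 <= F ->
  P - a1 + L * (X + Y) ^+ 2 <= F ->
  P - (a2 + a3) + L * (X + Y + Z) ^+ 2 <= F ->
  P - (a1 + a3) + L * (X + Y + Z) ^+ 2 <= F ->
  P - (a1 + a2) + L * (X + Y + Z) ^+ 2 <= F ->
  a1 + L * (X + Y + Z + D) ^+ 2 <= F ->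
  a2 + L * (X + Y + Z + D) ^+ 2 <= F ->
  a3 + L * (X + Y + Z + D) ^+ 2 <= F ->
  13%:R / 15%:R * (P + L * (X ^+ 2 + Y ^+ 2 + Z ^+ 2 + W)) <= F.
Proof.
move=> hL ha1 ha2 ha3 hP hZ hZY hYX hD hW1 hW2 B1 B2a B2b B3a B3b B3c B4a B4b B4c.
have hJ := Jpos hZ hZY hYX hD hW1 hW2.
have hLJ : 0 <= L * (4 * (X+Y+Z) * D + 2 * D * D - 13 * W) by apply: mulr_ge0; lra.
rewrite -subr_ge0.
have -> : F - 13%:R / 15%:R * (P + L * (X ^+ 2 + Y ^+ 2 + Z ^+ 2 + W)) =
  (15 * F - 13 * (P + L * (X ^+ 2 + Y ^+ 2 + Z ^+ 2 + W))) / 15.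
  by field.
apply: divr_ge0; last by lra.
case: (lerP (2 * Z) Y) => hZ2.
  have hf := f2pos hZ hZ2 hYX.
  have hLf : 0 <= L * (2*X*X - 9*Y*Y - 11*Z*Z + 8*X*Y + 4*X*Z + 4*Y*Z) by apply: mulr_ge0; lra.
  have E : 15 * F - 13 * (P + L * (X ^+ 2 + Y ^+ 2 + Z ^+ 2 + W)) =
     11 * (F - (P + L * X ^+ 2)) + 2 * (F - (a1 + L * (X + Y + Z + D) ^+ 2))
     + 2 * (F - (P - a2 + L * (X + Y) ^+ 2)) + 2 * (a1 - a2)
     + L * (2*X*X - 9*Y*Y - 11*Z*Z + 8*X*Y + 4*X*Z + 4*Y*Z)
     + L * (4 * (X+Y+Z) * D + 2 * D * D - 13 * W) by ring.
  have E' : 15 * F - 13 * (P + L * (X ^+ 2 + Y ^+ 2 + Z ^+ 2 + W)) =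
     11 * (F - (P + L * X ^+ 2)) + 2 * (F - (a2 + L * (X + Y + Z + D) ^+ 2))
     + 2 * (F - (P - a1 + L * (X + Y) ^+ 2)) + 2 * (a2 - a1)
     + L * (2*X*X - 9*Y*Y - 11*Z*Z + 8*X*Y + 4*X*Z + 4*Y*Z)
     + L * (4 * (X+Y+Z) * D + 2 * D * D - 13 * W) by ring.
  case: (lerP a2 a1) => h12.
    rewrite E; lra.
  rewrite E'; lra.
have hf := f3pos hZY (ltW hZ2) hYX.
have hLf : 0 <= L * (2*X*X - 10*Y*Y - 10*Z*Z + 6*X*Y + 6*X*Z + 6*Y*Z) by apply: mulr_ge0; lra.
have E : forall ai aj ak, 15 * F - 13 * (P + L * (X ^+ 2 + Y ^+ 2 + Z ^+ 2 + W)) =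
     12 * (F - (P + L * X ^+ 2)) + 2 * (F - (ai + L * (X + Y + Z + D) ^+ 2))
     + (F - (P - (aj + ak) + L * (X + Y + Z) ^+ 2)) + (2 * ai - aj - ak)
     + L * (2*X*X - 10*Y*Y - 10*Z*Z + 6*X*Y + 6*X*Z + 6*Y*Z)
     + L * (4 * (X+Y+Z) * D + 2 * D * D - 13 * W) by move=> *; ring.
case: (lerP a2 a1) => h12; case: (lerP a3 a1) => h13; case: (lerP a3 a2) => h23.
all: first [ rewrite (E a1 a2 a3); lra | rewrite (E a2 a1 a3); lra | rewrite (E a3 a1 a2); lra ].
Qed.

Lemma formed_in_top (V : finType) n (c : V -> 'I_n -> V) s a k j :
  formed c s a k j = if j \in top (s a) k then a else c a j.
Proof. by rewrite /formed ffunE inE. Qed.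

Lemma sum_split_set (R : realFieldType) n (S : {set 'I_n}) (F : 'I_n -> R) :
  \sum_(j < n) F j = \sum_(j in S) F j + \sum_(j in ~: S) F j.
Proof.
rewrite (bigID (mem S)) /=; congr (_ + _).
by apply: eq_bigl => j; rewrite inE.
Qed.

Lemma vertex_bound (R : realFieldType) (V : finType) n (psi : 'I_n -> V -> R)
    c s a (S : {set 'I_n}) :
  best_other_choice psi c -> sorted_order psi c s -> (#|S| <= n)%N ->
  \sum_(j in S) psi j a + \sum_(j in ~: S) psi j (c a j)
    <= \sum_(j < n) psi j (formed c s a #|S| j).
Proof.
move=> hb hs hS.
set T := top (s a) #|S|.
set m := margin psi c a.
have E1 : \sum_(j < n) psi j (formed c s a #|S| j) =
   \sum_(j < n) psi j (c a j) + \sum_(j in T) m j.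
  rewrite [X in _ = _ + X]big_mkcond /= -big_split /=.
  apply: eq_bigr => j _; rewrite formed_in_top -/T.
  by case: ifP => _; rewrite /m /margin; ring.
have E2 : \sum_(j in S) psi j a + \sum_(j in ~: S) psi j (c a j) =
   \sum_(j < n) psi j (c a j) + \sum_(j in S) m j.
  have hA : \sum_(j in S) psi j a = \sum_(j in S) psi j (c a j) + \sum_(j in S) m j.
    by rewrite -big_split /=; apply: eq_bigr => j _; rewrite /m /margin; ring.
  by rewrite (sum_split_set S (fun j => psi j (c a j))) hA; ring.
rewrite E1 E2 lerD2l.
rewrite (big_setID T) (big_setID (A := T) S) setIC lerD2l.
apply: sum_exchange.
  have h1 := cardsID S T; have h2 := cardsID T S.
  have hT : #|T| = #|S| by rewrite card_top.
  rewrite hT in h1.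
  rewrite setIC in h2.
  apply/eqP; rewrite -(eqn_add2l #|T :&: S|); apply/eqP.
  by rewrite h1 h2.
move=> i j; rewrite !inE => /andP [hiS hiT] /andP [hjT hjS].
set p := (s a)^-1%g i; set q := (s a)^-1%g j.
have hpq : (p < q)%N.
  by rewrite -leqNgt in hjT; apply: leq_trans hiT hjT.
have := hs a p q hpq.
by rewrite /p /q !permKV.
Qed.

Lemma potts_formed (R : realFieldType) (V : finType) n (psi : 'I_n -> V -> R)
    c s a k (lam : R) :
  best_other_choice psi c -> (k <= n)%N -> 0 <= lam ->
  lam * (k%:R) ^+ 2 <= potts lam (formed c s a k).
Proof.
move=> hb hk hl.
rewrite /potts; apply: ler_wpM2l => //.
rewrite (bigD1 a) //= -[X in X <= _]addr0; apply: lerD; last first.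
  by apply: sumr_ge0 => v _; apply: exprn_ge0; apply: ler0n.
have -> : nval (formed c s a k) a = #|top (s a) k|.
  rewrite /nval; apply: eq_card => j; rewrite !inE formed_in_top inE.
  case: ifP => _; first by rewrite eqxx.
  by have [/negbTE -> _] := hb a j.
by rewrite card_top.
Qed.

Lemma pass_bound (R : realFieldType) (V : finType) n (psi : 'I_n -> V -> R) (lam : R)
    c s xhat (xs : assignment V n) (T : {set V}) b :
  alpha_pass_output psi (potts lam) c s xhat -> (forall j v, 0 <= psi j v) -> 0 <= lam ->
  b \in T -> (0 < #|[set j | xs j \in T]|)%N ->
  \sum_(j < n) psi j (xs j) - \sum_(j in [set j | xs j \in T]) psi j (xs j)
    + \sum_(j | xs j == b) psi j b + lam * (#|[set j | xs j \in T]|%:R) ^+ 2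
  <= objF psi (potts lam) xhat.
Proof.
case=> hb [hs [_ hmax]] hpsi hl hbT hS.
set S := [set j | xs j \in T].
have hSn : (#|S| <= n)%N by have := max_card (mem S); rewrite card_ord.
apply: le_trans (hmax b #|S| _); last by rewrite hS.
rewrite /objF.
have hv := vertex_bound b hb hs hSn.
have hp := @potts_formed R V n psi c s b #|S| lam hb hSn hl.
have h1 : \sum_(j in ~: S) psi j (xs j) <= \sum_(j in ~: S) psi j (c b j).
  apply: ler_sum => j; rewrite !inE => hj.
  by apply: (hb b j).2; apply: contra hj => /eqP ->.
have h2 : \sum_(j | xs j == b) psi j b <= \sum_(j in S) psi j b.
  rewrite [X in _ <= X](bigID (fun j => xs j == b)) /=.
  have -> : \sum_(i in S | xs i == b) psi i b = \sum_(j | xs j == b) psi j b.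
    by apply: eq_bigl => j; rewrite inE; case: (xs j =P b) => [->|]; rewrite ?hbT ?andbF.
  rewrite -[X in X <= _]addr0; apply: lerD => //.
  by apply: sumr_ge0 => j _.
have h3 := sum_split_set S (fun j => psi j (xs j)).
rewrite h3.
lra.
Qed.

Definition aa (R : realFieldType) (V : finType) n (psi : 'I_n -> V -> R)
  (xs : assignment V n) (v : V) : R := \sum_(j | xs j == v) psi j v.

Lemma sum_part (R : realFieldType) (V : finType) n (psi : 'I_n -> V -> R)
  (xs : assignment V n) (T : {set V}) :
  \sum_(j in [set j | xs j \in T]) psi j (xs j) = \sum_(v in T) aa psi xs v.
Proof.
rewrite (partition_big xs (mem T)) /=; last by move=> j; rewrite inE.
apply: eq_bigr => v hv; rewrite /aa.
apply: eq_big => j; first by rewrite inE; case: (xs j =P v) => [->|]; rewrite ?hv ?andbF.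
by move=> /andP [_ /eqP ->].
Qed.

Lemma card_part (V : finType) n (xs : assignment V n) (T : {set V}) :
  #|[set j | xs j \in T]| = (\sum_(v in T) nval xs v)%N.
Proof.
rewrite -sum1_card (partition_big xs (mem T)) /=; last by move=> j; rewrite inE.
apply: eq_bigr => v hv; rewrite /nval -sum1_card.
apply: eq_bigl => j; rewrite !inE; case: (xs j =P v) => [->|]; rewrite ?hv ?andbF //.
Qed.

Lemma sum_split_fin (R : realFieldType) (I : finType) (S : {set I}) (F : I -> R) :
  \sum_i F i = \sum_(i in S) F i + \sum_(i in ~: S) F i.
Proof.
rewrite (bigID (mem S)) /=; congr (_ + _).
by apply: eq_bigl => j; rewrite inE.
Qed.

Lemma pass_bound2 (R : realFieldType) (V : finType) n (psi : 'I_n -> V -> R) (lam : R)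
    c s xhat (xs : assignment V n) (T : {set V}) b :
  alpha_pass_output psi (potts lam) c s xhat -> (forall j v, 0 <= psi j v) -> 0 <= lam ->
  b \in T -> (0 < \sum_(v in T) nval xs v)%N ->
  \sum_(j < n) psi j (xs j) - \sum_(v in T) aa psi xs v + aa psi xs b
    + lam * (\sum_(v in T) (nval xs v)%:R) ^+ 2
  <= objF psi (potts lam) xhat.
Proof.
move=> ho hpsi hl hb hpos.
rewrite -sum_part -natr_sum -card_part /aa.
apply: (pass_bound ho hpsi hl hb).
by move: hpos; rewrite -card_part.
Qed.

Lemma sum3 (R : realFieldType) (V : finType) (v1 v2 v3 : V) (F : V -> R) :
  v1 != v2 -> v1 != v3 -> v2 != v3 ->
  \sum_(v in [set v1; v2; v3]) F v = F v1 + F v2 + F v3.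
Proof.
move=> h12 h13 h23.
have -> : [set v1; v2; v3] = v1 |: (v2 |: [set v3]) by apply/setP => v; rewrite !inE ?orbA.
rewrite big_setU1 ?big_set1; last by rewrite !inE negb_or h12 h13.
rewrite big_setU1 ?big_set1 //= ?inE //; by rewrite addrA.
Qed.

Lemma sum2 (R : realFieldType) (V : finType) (v1 v2 : V) (F : V -> R) :
  v1 != v2 -> \sum_(v in [set v1; v2]) F v = F v1 + F v2.
Proof.
move=> h12.
by rewrite big_setU1 ?big_set1 // !inE.
Qed.

Lemma big_setT' (R : Type) (idx : R) (op : Monoid.com_law idx) (I : finType) (F : I -> R) :
  \big[op/idx]_(i in [set: I]) F i = \big[op/idx]_i F i.
Proof. by apply: eq_bigl => i; rewrite in_setT. Qed.

Unset Implicit Arguments.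

Theorem theorem4 (R : realFieldType) (V : finType) (n : nat)
    (psi : 'I_n -> V -> R) (lam : R)
    (c : V -> 'I_n -> V) (s : V -> {perm 'I_n})
    (xhat xstar : assignment V n) :
  (1 < #|V|)%N ->
  (forall j v, 0 <= psi j v) ->
  0 < lam ->
  alpha_pass_output psi (potts lam) c s xhat ->
  (forall x, objF psi (potts lam) x <= objF psi (potts lam) xstar) ->
  objF psi (potts lam) xhat >= (13%:R / 15%:R) * objF psi (potts lam) xstar.
Proof.
move=> hV hpsi hl ho _.
have hl0 : 0 <= lam by apply: ltW.
have hn : (0 < n)%N.
  case: ho => _ [_ [[a0 [k0 [hk0 _]]] _]].
  by case/andP: hk0 => h1 h2; apply: leq_trans h1 h2.
set cnt := nval xstar.
set a := aa psi xstar.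
set P := \sum_(j < n) psi j (xstar j).
set F := objF psi (potts lam) xhat.
have hB := fun T b => @pass_bound2 R V n psi lam c s xhat xstar T b ho hpsi hl0.
have hsumcnt : (\sum_v cnt v)%N = n.
  rewrite -big_setT' -card_part.
  have -> : [set j | xstar j \in [set: V]] = [set: 'I_n].
    by apply/setP => j; rewrite !inE.
  by rewrite cardsT card_ord.
have hP : \sum_v a v = P.
  rewrite -big_setT' -sum_part /P.
  by apply: eq_bigl => j; rewrite !inE.
have hsumcntR : \sum_v (cnt v)%:R = n%:R :> R by rewrite -natr_sum hsumcnt.
have ha0 : forall v, 0 <= a v by move=> v; apply: sumr_ge0.
have /card_gt0P [v0 _] : (0 < #|V|)%N by apply: ltnW.
case: (@arg_maxnP V v0 xpredT cnt isT) => v1 _ hv1.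
have hX : (0 < cnt v1)%N.
  rewrite lt0n; apply/negP => /eqP h0.
  have : (\sum_v cnt v <= \sum_(v : V) 0)%N by apply: leq_sum => v _; rewrite -h0; apply: hv1.
  rewrite big1_eq hsumcnt leqn0 => /eqP hn0.
  by move: hn; rewrite hn0.
have hposT : forall T : {set V}, v1 \in T -> (0 < \sum_(v in T) cnt v)%N.
  move=> T hT; rewrite (bigD1 v1) //=.
  by apply: leq_trans hX (leq_addr _ _).
have : (0 < #|[set~ v1]|)%N by rewrite cardsC1 -subn1 subn_gt0.
case/card_gt0P => w0; rewrite in_setC1 => hw0.
case: (@arg_maxnP V w0 (fun v => v != v1) cnt hw0) => v2 hv21 hv2.
have h12 : v1 != v2 by rewrite eq_sym.
set X := (cnt v1)%:R : R.
set Y := (cnt v2)%:R : R.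
have hYX : Y <= X by rewrite ler_nat; apply: hv1.
have hOPT : objF psi (potts lam) xstar = P + lam * \sum_v (cnt v)%:R ^+ 2 by [].
have B1 : P + lam * X ^+ 2 <= F.
  have := hB [set v1] v1 (set11 v1) (hposT _ (set11 v1)).
  rewrite !big_set1 -/a -/P -/F -/cnt -/X. lra.
have B2a : P - a v2 + lam * (X + Y) ^+ 2 <= F.
  have := hB [set v1; v2] v1 (setU11 _ _) (hposT _ (setU11 _ _)).
  rewrite !sum2 // -/a -/P -/F -/cnt -/X -/Y. lra.
have hv2T : v2 \in [set v1; v2] by rewrite !inE eqxx orbT.
have B2b : P - a v1 + lam * (X + Y) ^+ 2 <= F.
  have := hB [set v1; v2] v2 hv2T (hposT _ (setU11 _ _)).
  rewrite !sum2 // -/a -/P -/F -/cnt -/X -/Y. lra.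
have hB4 : forall b, a b + lam * (n%:R) ^+ 2 <= F.
  move=> b; have := hB [set: V] b (in_setT b) (hposT _ (in_setT v1)).
  rewrite !big_setT' -/a -/cnt -/P hP hsumcntR -/F. lra.
case: (pickP (fun v => (v != v1) && (v != v2))) => [u0 hu0 | hnone].
- case: (@arg_maxnP V u0 (fun v => (v != v1) && (v != v2)) cnt hu0) => v3 /andP [hv31 hv32] hv3.
  have h13 : v1 != v3 by rewrite eq_sym.
  have h23 : v2 != v3 by rewrite eq_sym.
  set T3 := [set v1; v2; v3].
  set Z := (cnt v3)%:R : R.
  set D := \sum_(v in ~: T3) (cnt v)%:R : R.
  set W := \sum_(v in ~: T3) (cnt v)%:R ^+ 2 : R.
  have hZY : Z <= Y by rewrite ler_nat; apply: hv2.
  have hZ : 0 <= Z by apply: ler0n.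
  have hD : 0 <= D by apply: sumr_ge0 => v _; apply: ler0n.
  have hrest : forall v, v \in ~: T3 -> (cnt v <= cnt v3)%N.
    move=> v; rewrite /T3 !inE !negb_or => /andP [/andP [e1 e2] _]; apply: hv3.
    by rewrite e1 e2.
  have hW1 : W <= Z * D.
    rewrite /D mulr_sumr; apply: ler_sum => v hv.
    rewrite expr2 ler_wpM2r ?ler0n // ler_nat; exact: hrest.
  have hW2 : W <= D * D.
    rewrite /D [X in _ <= X]mulr_sumr; apply: ler_sum => v hv.
    rewrite expr2 ler_wpM2r ?ler0n //.
    rewrite (bigD1 v) //= lerDl; apply: sumr_ge0 => w _; apply: ler0n.
  have hN : n%:R = X + Y + Z + D :> R.
    by rewrite -hsumcntR (sum_split_fin T3) sum3.
  have hQ : \sum_v (cnt v)%:R ^+ 2 = X ^+ 2 + Y ^+ 2 + Z ^+ 2 + W :> R.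
    by rewrite (sum_split_fin T3) sum3.
  have hT3 : v1 \in T3 by rewrite !inE eqxx.
  have hv2T3 : v2 \in T3 by rewrite !inE eqxx orbT.
  have hv3T3 : v3 \in T3 by rewrite !inE eqxx !orbT.
  have hPa : a v1 + a v2 + a v3 <= P.
    rewrite -hP (sum_split_fin T3) sum3 // lerDl.
    by apply: sumr_ge0.
  have B3 : forall b, b \in T3 -> P - (a v1 + a v2 + a v3) + a b + lam * (X + Y + Z) ^+ 2 <= F.
    move=> b hb; have := hB T3 b hb (hposT _ hT3).
    by rewrite !sum3 // -/a -/P -/F -/cnt -/X -/Y -/Z.
  have B3a := B3 v1 hT3; have B3b := B3 v2 hv2T3; have B3c := B3 v3 hv3T3.
  have B4a := hB4 v1; have B4b := hB4 v2; have B4c := hB4 v3.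
  rewrite hN in B4a B4b B4c.
  rewrite hOPT hQ.
  apply: (arith hl (ha0 v1) (ha0 v2) (ha0 v3) hPa hZ hZY hYX hD hW1 hW2 B1 B2a B2b).
  + lra. + lra. + lra. + exact: B4a. + exact: B4b. + exact: B4c.
- have hs2 : forall G : V -> R, \sum_v G v = G v1 + G v2.
    move=> G; rewrite (bigD1 v1) //= (bigD1 v2) //= big_pred0; first by rewrite addr0.
    exact: hnone.
  have hN : n%:R = X + Y + 0 + 0 :> R by rewrite -hsumcntR hs2 !addr0.
  have hQ : \sum_v (cnt v)%:R ^+ 2 = X ^+ 2 + Y ^+ 2 + 0 ^+ 2 + 0 :> R.
    by rewrite hs2 expr0n /= !addr0.
  have hPa : a v1 + a v2 + 0 <= P by rewrite -hP hs2 addr0.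
  have B4a := hB4 v1; have B4b := hB4 v2.
  rewrite hN in B4a B4b.
  rewrite hOPT hQ.
  have h00 : (0:R) <= 0 by [].
  apply: (arith hl (ha0 v1) (ha0 v2) h00 hPa h00 (ler0n _ _) hYX h00 _ _ B1 B2a B2b).
  + by rewrite mul0r.
  + by rewrite mul0r.
  + rewrite addr0; lra.
  + rewrite addr0; lra.
  + rewrite addr0; have := ha0 v1; lra.
  + exact: B4a.
  + exact: B4b.
  + have := ha0 v1; lra.
Qed.
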